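(* In the setting of the context, suppose $\mathbb{P}(q(\mathcal{X})<1)>0$, and let $B\ge2$ be an integer with $(B+1)\alpha\in\mathbb{N}$. Then $k_B-k_{B-1}=1$ and $k_{B+1}-k_B=0$, and consequently $\mathrm{Pow}(B-1)<\mathrm{Pow}(B)$ and $\mathrm{Pow}(B+1)<\mathrm{Pow}(B)$.
   Context: Let $\mathcal{X}$ be a random observed dataset taking values in a space on which a finite group $\mathcal{G}$ acts (write $\mathcal{X}^\pi$ for the action of $\pi\in\mathcal{G}$; the identity of $\mathcal{G}$ fixes every dataset), and let $T$ be a real-valued test statistic. Fix $\alpha\in(0,1)$. For an integer $B\ge1$, let $\pi_1,\dots,\pi_B$ be i.i.d. uniform on $\mathcal{G}$, independent of $\mathcal{X}$. The Monte Carlo permutation $p$-value is $p_B(\mathcal{X})=\bigl(1+\sum_{i=1}^B \mathbf{1}\{T(\mathcal{X}^{\pi_i})\ge T(\mathcal{X})\}\bigr)/(B+1)$, and the test rejects iff $p_B(\mathcal{X})\le\alpha$. Define $q(\mathcal{X})=\mathbb{P}(T(\mathcal{X}^\pi)\ge T(\mathcal{X})\mid \mathcal{X})$ for $\pi$ uniform on $\mathcal{G}$ independent of $\mathcal{X}$ (so $q(\mathcal{X})\in[1/|\mathcal{G}|,1]$), $R_B=\sum_{i=1}^B \mathbf{1}\{T(\mathcal{X}^{\pi_i})\ge T(\mathcal{X})\}$ (so $R_B\mid\mathcal{X}\sim\mathrm{Binomial}(B,q(\mathcal{X}))$), and the critical count $k_B=\lfloor (B+1)\alpha\rfloor-1$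 for integers $B\ge 0$. Then $\{p_B(\mathcal{X})\le\alpha\}=\{R_B\le k_B\}$. The conditional rejection probability is $\phi_B(\mathcal{X})=\mathbb{P}(R_B\le k_B\mid\mathcal{X})$ and the (unconditional) power is $\mathrm{Pow}(B)=\mathbb{E}[\phi_B(\mathcal{X})]=\mathbb{E}\bigl[\mathbb{P}(\mathrm{Binomial}(B,q(\mathcal{X}))\le k_B\mid\mathcal{X})\bigr]$, for $B\ge1$. *)

(* Defs.v *)
From HB Require Import structures.
From mathcomp Require Import all_boot all_order all_algebra all_fingroup.
From mathcomp Require Import all_classical all_reals all_analysis.
Set Implicit Arguments. Unset Strict Implicit. Unset Printing Implicit Defensive.
Import Order.TTheory GRing.Theory Num.Theory.
Local Open Scope ring_scope.

Definition is_group_action (gT : finGroupType) (D : Type) (act : D -> gT -> D) :=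
  (forall x, act x 1%g = x) /\ (forall x g h, act (act x g) h = act x (g * h)%g).

(* q(x) = P(T(x^pi) >= T(x)) for pi uniform on the finite group gT. *)
Definition qfun (R : realType) (gT : finGroupType) (D : Type)
  (act : D -> gT -> D) (T : D -> R) (x : D) : R :=
  #|[set g : gT | T x <= T (act x g)]|%:R / #|gT|%:R.

Definition kB (R : realType) (alpha : R) (B : nat) : int :=
  Num.floor (B.+1%:R * alpha) - 1.

Definition binom_cdf (R : realType) (B : nat) (q : R) (k : int) : R :=
  \sum_(j < B.+1 | (j%:Z <= k)%R) 'C(B, j)%:R * q ^+ j * (1 - q) ^+ (B - j).

Definition phiB (R : realType) (gT : finGroupType) (D : Type)
  (act : D -> gT -> D) (T : D -> R) (alpha : R) (B : nat) (x : D) : R :=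
  binom_cdf B (qfun act T x) (kB alpha B).

Definition Pow (R : realType) (d : measure_display) (Omega : measurableType d)
  (P : probability Omega R) (gT : finGroupType) (D : Type)
  (act : D -> gT -> D) (T : D -> R) (X : Omega -> D) (alpha : R) (B : nat)
  : \bar R :=
  (\int[P]_w (phiB act T alpha B (X w))%:E)%E.

(* Main.v *)
Require Import Defs.
From HB Require Import structures.
From mathcomp Require Import all_boot all_order all_algebra all_fingroup.
From mathcomp Require Import all_classical all_reals all_analysis.
From mathcomp Require Import measurable_realfun.
From mathcomp Require Import zify ring lra.
Import Order.TTheory GRing.Theory Num.Theory.
Set Implicit Arguments. Unset Strict Implicit.
Local Open Scope classical_set_scope.
Local Open Scope ring_scope.

Definition tb (R : realType) (B j : nat) (q : R) : R :=
  'C(B, j)%:R * q ^+ j * (1 - q) ^+ (B - j).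

Lemma cdf_step (R : realType) (B m : nat) (q : R) : (m <= B)%N ->
  binom_cdf B q m%:Z = binom_cdf B q (m%:Z - 1) + tb B m q.
Proof.
move=> mB; rewrite /binom_cdf (bigD1 (Ordinal (n:=B.+1) (m:=m) mB)) /=; last by [].
rewrite addrC; congr (_ + _); apply: eq_bigl => j.
rewrite -val_eqE /=. apply/idP/idP.
- move=> /andP[h1 h2]. move: h1 h2. lia.
- move=> h. apply/andP; split; lia.
Qed.

Lemma cdf_neg (R : realType) (B : nat) (q : R) : binom_cdf B q (-1) = 0.
Proof. by rewrite /binom_cdf big1 // => j; rewrite leNgt (lt_le_trans _ (ler0n _ j)). Qed.

Lemma cdf_rec (R : realType) (B m : nat) (q : R) : (m <= B)%N ->
  binom_cdf B.+1 q m%:Z = binom_cdf B q m%:Z - q * tb B m q.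
Proof.
elim: m => [|m IH] mB.
  rewrite !cdf_step // sub0r !cdf_neg !add0r /tb !bin0 !subn0 !expr0.
  rewrite exprS; ring.
rewrite (@cdf_step _ B.+1 m.+1 q (ltnW mB)) (@cdf_step _ B m.+1 q mB).
have -> : (m.+1%:Z - 1) = m%:Z by rewrite -addn1 PoszD addrK.
rewrite IH; last by lia.
rewrite /tb binS natrD subSS.
have -> : (B - m = (B - m.+1).+1)%N by lia.
rewrite !exprS; ring.
Qed.
Lemma kB_vals (R : realType) (alpha : R) (B n : nat) : 0 < alpha < 1 -> (2 <= B)%N ->
  B.+1%:R * alpha = n%:R ->
  exists m : nat, [/\ (m < B)%N, kB alpha B = m%:Z, kB alpha B.-1 = m%:Z - 1 &
     kB alpha B.+1 = m%:Z].
Proof.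
move=> /andP[a0 a1] B2 hn.
have n0 : (0 < n)%N.
  by rewrite -(ltr0n R) -hn mulr_gt0 // ltr0n.
have nB : (n < B.+1)%N.
  rewrite -(ltr_nat R) -hn -[X in _ < X]mulr1 ltr_pM2l // ltr0n //.
exists n.-1; split; first by lia.
- rewrite /kB hn (@floor_def _ _ n); first by lia.
  rewrite intrD -!pmulrn; apply/andP; split; [lra|]. 
  have : (0:R) < 1 by []. lra.
- rewrite /kB (ltn_predK B2).
  have -> : B%:R * alpha = n%:R - alpha.
    by rewrite -hn -addn1 natrD mulrDl mul1r addrK.
  rewrite (@floor_def _ _ (n%:Z - 1)); first by lia.
  rewrite -[(_ - 1 + 1)]/(Posz n - 1 + 1) subrK.
  rewrite intrB -!pmulrn; apply/andP; split; lra.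
- rewrite /kB.
  have -> : B.+2%:R * alpha = n%:R + alpha.
    by rewrite -hn -[B.+2]addn1 natrD mulrDl mul1r.
  rewrite (@floor_def _ _ n); first by lia.
  rewrite intrD -!pmulrn; apply/andP; split; lra.
Qed.
Lemma bint (R : realType) d (Omega : measurableType d) (P : probability Omega R)
  (h : Omega -> R) (M : R) : measurable_fun setT h -> (forall w, `|h w| <= M) ->
  P.-integrable setT (EFin \o h).
Proof.
move=> mh hM; apply: measurable_bounded_integrable => //.
  by apply: (le_lt_trans (probability_le1 P measurableT)); exact: ltry.
rewrite /bounded_near. near=> M'. move=> x _ /=.
apply: (le_trans (hM x)). near: M'. by apply: nbhs_pinfty_ge; rewrite num_real.
Unshelve. all: by end_near.
Qed.

Lemma strict_int (R : realType) d (Omega : measurableType d) (P : probability Omega R)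
  (h1 h2 : Omega -> R) (M1 M2 : R) (S : set Omega) (c : R) :
  measurable_fun setT h1 -> measurable_fun setT h2 ->
  (forall w, `|h1 w| <= M1) -> (forall w, `|h2 w| <= M2) ->
  (forall w, h1 w <= h2 w) -> measurable S -> 0 < c ->
  (forall w, S w -> c <= h2 w - h1 w) -> (0 < P S)%E ->
  (\int[P]_w (h1 w)%:E < \int[P]_w (h2 w)%:E)%E.
Proof.
move=> m1 m2 b1 b2 h12 mS c0 hS PS.
have i1 := bint P m1 b1. have i2 := bint P m2 b2.
have ig := integrableB measurableT i2 i1.
have -> : (\int[P]_w (h2 w)%:E = \int[P]_w ((EFin \o h1) w + ((EFin \o h2) \- (EFin \o h1)) w))%E.
  by apply: eq_integral => w _ /=; rewrite -!EFinD; congr EFin; ring.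
rewrite integralD //; rewrite lteDl; last exact: integrable_fin_num.
apply: (@lt_le_trans _ _ (c%:E * P S)%E); first by rewrite mule_gt0.
have -> : (c%:E * P S = \int[P]_w (c%:E * (\1_S w)%:E))%E.
  rewrite ge0_integralZl_EFin //; last exact: ltW.
  - by rewrite integral_indic // setIT.
  - by apply/measurable_EFinP; exact: measurable_indic.
apply: ge0_le_integral => //.
- by move=> w _; rewrite -EFinM lee_fin mulr_ge0 // ltW.
- by apply/measurable_EFinP; apply: measurable_funM => //; exact: measurable_indic.
- exact: measurable_int ig.
- move=> w _ /=; rewrite -EFinM -EFinB lee_fin /indic.
  case: (boolP (w \in S)) => [/set_mem Sw|_]; first by rewrite mulr1 hS.
  by rewrite mulr0 subr_ge0.
Qed.
Lemma cdf_bound (R : realType) (B : nat) (k : int) (q : R) : 0 <= q <= 1 ->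
  `|binom_cdf B q k| <= \sum_(j < B.+1) 'C(B, j)%:R.
Proof.
move=> /andP[q0 q1].
have t0 j : 0 <= 'C(B, j)%:R * q ^+ j * (1 - q) ^+ (B - j) :> R.
  by rewrite !mulr_ge0 // ?exprn_ge0 // subr_ge0.
rewrite /binom_cdf ger0_norm; last by apply: sumr_ge0 => j _.
rewrite big_mkcond /=; apply: ler_sum => j _; case: ifP => _ //.
rewrite -[leRHS]mulr1 -mulrA ler_wpM2l //.
rewrite mulr_ile1 ?exprn_ge0 ?exprn_ile1 // ?subr_ge0 //; lra.
Qed.

Lemma cdf_meas (R : realType) d (Omega : measurableType d) (Q : Omega -> R)
  (B : nat) (k : int) : measurable_fun setT Q ->
  measurable_fun setT (fun w => binom_cdf B (Q w) k).
Proof.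
move=> mQ; rewrite /binom_cdf.
have -> : (fun w => \sum_(j < B.+1 | (j%:Z <= k)%R) 'C(B, j)%:R * Q w ^+ j * (1 - Q w) ^+ (B - j)) =
  (fun w => \sum_(j < B.+1) (if (j%:Z <= k)%R then 'C(B, j)%:R * Q w ^+ j * (1 - Q w) ^+ (B - j) else 0)).
  by apply: funext => w; rewrite big_mkcond.
apply: measurable_sum => j; case: ((nat_of_ord j)%:Z <= k)%R; last exact: measurable_cst.
apply: measurable_funM; last first.
  by apply: measurable_funX; apply: measurable_funB => //; exact: measurable_cst.
apply: measurable_funM; first exact: measurable_cst.
exact: measurable_funX.
Qed.

Lemma qfun_meas (R : realType) (dD : measure_display) (D : measurableType dD)
  (gT : finGroupType) (act : D -> gT -> D) (T : D -> R) :
  measurable_fun setT T -> (forall g : gT, measurable_fun setT (fun x => act x g)) ->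
  measurable_fun setT (qfun act T).
Proof.
move=> mT ma.
have -> : qfun act T =
   (fun x => (\sum_(g : gT) (if T x <= T (act x g) then 1 else 0)) * #|gT|%:R^-1 :> R).
  apply: funext => x; rewrite /qfun; congr (_ * _).
  rewrite -sum1_card natr_sum big_mkcond /=; apply: eq_bigr => g _.
  by rewrite inE; case: ifP.
apply: measurable_funM; last exact: measurable_cst.
apply: measurable_sum => g; apply: measurable_fun_ifT.
- apply: measurable_fun_ler => //. exact: measurableT_comp.
- exact: measurable_cst.
- exact: measurable_cst.
Qed.
Lemma qfun_bnd (R : realType) (D : Type)
  (gT : finGroupType) (act : D -> gT -> D) (T : D -> R) (x : D) :
  is_group_action act ->
  [/\ #|gT|%:R^-1 <= qfun act T x, qfun act T x <= 1 &
      (qfun act T x < 1 -> #|gT|%:R^-1 <= 1 - qfun act T x)].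
Proof.
move=> [a1 _]; rewrite /qfun.
set c := #|_|.
set N := #|gT|.
have N0 : (0 < N)%N by apply/card_gt0P; exists 1%g.
have c1 : (1 <= c)%N.
  by apply/card_gt0P; exists 1%g; rewrite inE a1.
have cN : (c <= N)%N by exact: max_card.
have N0' : (0 : R) < N%:R by rewrite ltr0n.
split.
- by rewrite -[leLHS]mul1r ler_pM2r ?invr_gt0 // ler1n.
- by rewrite ler_pdivrMr // mul1r ler_nat.
- rewrite ltr_pdivrMr // mul1r ltr_nat => cN'.
  rewrite lerBrDr -[leRHS](divff (lt0r_neq0 N0')) -[X in X + _ <= _]mul1r -mulrDl ler_pM2r ?invr_gt0 //.
  by rewrite -[1 + _]/((1%:R : R) + c%:R) -natrD ler_nat; lia.
Qed.

Lemma tb_low (R : realType) (C i j : nat) (a q : R) : 0 <= a -> a <= q -> a <= 1 - q ->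
  C%:R * a ^+ i * a ^+ j <= C%:R * q ^+ i * (1 - q) ^+ j.
Proof.
move=> a0 aq a1q.
rewrite -!mulrA ler_wpM2l // ler_pM ?exprn_ge0 //.
- by rewrite lerXn2r // nnegrE; lra.
- by rewrite lerXn2r // nnegrE; lra.
Qed.

Theorem mainTheorem7 (R : realType) (d : measure_display)
  (Omega : measurableType d) (P : probability Omega R)
  (dD : measure_display) (D : measurableType dD)
  (gT : finGroupType) (act : D -> gT -> D) (T : D -> R) (X : Omega -> D)
  (alpha : R) (B : nat) :
  is_group_action act ->
  measurable_fun setT X ->
  measurable_fun setT T ->
  (forall g : gT, measurable_fun setT (fun x => act x g)) ->
  0 < alpha < 1 ->
  (0 < P [set w | (qfun act T (X w) < 1)%R])%E ->
  (2 <= B)%N ->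
  (exists n : nat, B.+1%:R * alpha = n%:R) ->
  kB alpha B - kB alpha B.-1 = 1 /\ kB alpha B.+1 - kB alpha B = 0 /\
  (Pow P act T X alpha B.-1 < Pow P act T X alpha B)%E /\
  (Pow P act T X alpha B.+1 < Pow P act T X alpha B)%E.
Proof.
move=> ga mX mT ma a01 PS B2 [n hn].
have [m [mB k0 k1 k2]] := kB_vals a01 B2 hn.
split; first by rewrite k0 k1; lia.
split; first by rewrite k0 k2; lia.
set S := [set w | qfun act T (X w) < 1].
have mQ : measurable_fun setT (fun w => qfun act T (X w)).
  exact: measurableT_comp (qfun_meas mT ma) mX.
have mS : measurable S.
  have := (measurable_fun_ltr mQ (measurable_cst (1:R))) measurableT [set true] I.
  rewrite setTI; congr measurable; apply/seteqP; split => w /=.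
set a := #|gT|%:R^-1 : R.
have a0 : 0 < a by rewrite invr_gt0 ltr0n; apply/card_gt0P; exists 1%g.
have Q01 w : 0 <= qfun act T (X w) <= 1.
  have [h1 h2 _] := qfun_bnd T (X w) ga.
  by rewrite h2 andbT (le_trans (ltW a0)).
have QS w : S w -> a <= qfun act T (X w) /\ a <= 1 - qfun act T (X w).
  by move=> Sw; have [h1 _ h3] := qfun_bnd T (X w) ga; split => //; exact: h3.
set M := \sum_(j < B.+2) 'C(B.+1, j)%:R : R.
have bnd (BB : nat) (k : int) w : (BB <= B.+1)%N ->
   `|phiB act T alpha BB (X w)| <= \sum_(j < BB.+1) 'C(BB, j)%:R.
  by move=> _; apply: cdf_bound.
have mphi (BB : nat) : measurable_fun setT (fun w => phiB act T alpha BB (X w)).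
  exact: (cdf_meas _ _ mQ).
split.
- have [B' eB] : exists B', B = B'.+1 by exists B.-1; lia.
  move: k0 k1 mB; rewrite eB /= => k0 k1 mB.
  have mB' : (m <= B')%N by lia.
  apply: (@strict_int R d Omega P (fun w => phiB act T alpha B' (X w))
    (fun w => phiB act T alpha B'.+1 (X w)) _ _ S
    ('C(B', m)%:R * a ^+ m * a ^+ (B' - m).+1)) => //.
  + by move=> w; apply: cdf_bound.
  + by move=> w; apply: cdf_bound.
  + move=> w; rewrite -subr_ge0 /phiB k0 k1 cdf_rec // (cdf_step _ mB').
    have [q0 q1] := andP (Q01 w).
    rewrite /tb.
    have -> : forall (x y q : R), x + y - q * y - x = (1 - q) * y by move=> *; ring.
    by rewrite !mulr_ge0 // ?exprn_ge0 // subr_ge0.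
  + by rewrite !mulr_gt0 ?exprn_gt0 // ltr0n bin_gt0.
  + move=> w Sw; rewrite /phiB k0 k1 cdf_rec // (cdf_step _ mB').
    have [h1 h2] := QS w Sw.
    rewrite /tb.
    have -> : forall (x y q : R), x + y - q * y - x = (1 - q) * y by move=> *; ring.
    apply: (le_trans (tb_low _ _ _ (ltW a0) h1 h2)).
    by rewrite le_eqVlt; apply/orP; left; apply/eqP; rewrite exprS; ring.
- apply: (@strict_int R d Omega P (fun w => phiB act T alpha B.+1 (X w))
    (fun w => phiB act T alpha B (X w)) _ _ S
    ('C(B, m)%:R * a ^+ m.+1 * a ^+ (B - m))) => //.
  + by move=> w; apply: cdf_bound.
  + by move=> w; apply: cdf_bound.
  + move=> w; rewrite -subr_ge0 /phiB k0 k2 cdf_rec ?(ltnW mB) //.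
    have [q0 q1] := andP (Q01 w).
    rewrite /tb opprB addrC subrK.
    by rewrite !mulr_ge0 // ?exprn_ge0 // subr_ge0.
  + by rewrite !mulr_gt0 ?exprn_gt0 // ltr0n bin_gt0 ltnW.
  + move=> w Sw; rewrite /phiB k0 k2 cdf_rec ?(ltnW mB) //.
    have [h1 h2] := QS w Sw.
    rewrite /tb opprB addrC subrK.
    apply: (le_trans (tb_low _ _ _ (ltW a0) h1 h2)).
    by rewrite le_eqVlt; apply/orP; left; apply/eqP; rewrite exprS; ring.
Qed.
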